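(* Let $f\in A[X]$ be monic with discriminant $\Delta=\mathrm{Res}_X(f,f')\neq 0$, $r=v(\Delta)$, and let $N>2r$ be an integer. Let $f_N\in (A/\pi^NA)[X]$ be the reduction of $f$ modulo $\pi^N$ and $S_N\subseteq A/\pi^NA$ its set of roots. Then the number of roots of $f$ in $K$ is at least $|S_N/\approx|$.
   Context: $K$ is a field complete with respect to a non-archimedean discrete valuation $v$, normalized by $v(\pi)=1$ for a uniformizer $\pi$ of the valuation ring $A=\{x\in K: v(x)\geq 0\}$; the residue field $A/\pi A$ is finite. The equivalence relation $\approx$ on $S_N$ is: $x\approx y$ iff either $N\leq r$ and $x=y$, or $N>r$ and $x\equiv y \pmod{\overline{\pi}^{\,r+1}}$, where $\overline{\pi}$ is the image of $\pi$ in $A/\pi^NA$. *)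

(* Defs.v *)
From mathcomp Require Import all_boot all_order all_algebra.
Set Implicit Arguments. Unset Strict Implicit. Unset Printing Implicit Defensive.
Import Order.TTheory GRing.Theory Num.Theory.
Local Open Scope ring_scope.

Section DVR.
Variables (K : fieldType) (v : K -> int) (pi : K).

(* v is a (non-archimedean, Z-valued, i.e. discrete) valuation on K^*;
   v 0 = +oo is handled by treating 0 separately everywhere. *)
Definition is_discrete_valuation : Prop :=
  (forall x y : K, x != 0 -> y != 0 -> v (x * y) = v x + v y) /\
  (forall x y : K, x != 0 -> y != 0 -> x + y != 0 ->
     Order.min (v x) (v y) <= v (x + y)).

Definition inA (x : K) : bool := (x == 0) || (0 <= v x).

Definition in_piA (n : nat) (x : K) : Prop :=
  exists c : K, inA c /\ x = pi ^+ n * c.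

Definition congr_pi (n : nat) (x y : K) : Prop := in_piA n (x - y).

Definition vclose (n : nat) (x y : K) : bool :=
  (x - y == 0) || (n%:Z <= v (x - y)).

Definition v_complete : Prop :=
  forall u : nat -> K,
    (forall n : nat, exists m0 : nat, forall m p : nat,
        (m0 <= m)%N -> (m0 <= p)%N -> vclose n (u m) (u p)) ->
    exists l : K, forall n : nat, exists m0 : nat, forall m : nat,
        (m0 <= m)%N -> vclose n (u m) l.

Definition finite_residue_field : Prop :=
  exists s : seq K, all inA s /\
    forall a : K, inA a -> exists2 b, b \in s & congr_pi 1 a b.

(* The relation x ~ y on S_N, stated on lifts a, b in A of x, y in A/pi^N A:
   - if N <= r : x = y in A/pi^N A;
   - if N > r  : x = y mod (image of pi)^(r+1) in A/pi^N A, i.e.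
                 a - b in pi^(r+1) A + pi^N A. *)
Definition approx (N r : nat) (a b : K) : Prop :=
  if (N <= r)%N then congr_pi N a b
  else exists c : K, inA c /\ congr_pi N (a - b) (pi ^+ r.+1 * c).

End DVR.

(* Main.v *)
From HB Require Import structures.
Require Import Defs.
From mathcomp Require Import all_boot all_order all_algebra zify ring lra.
Set Implicit Arguments. Unset Strict Implicit. Unset Printing Implicit Defensive.
Import Order.TTheory GRing.Theory Num.Theory.
Local Open Scope ring_scope.

Lemma res_const (R : comNzRingType) (p : {poly R}) c :
  resultant p c%:P = c ^+ (size p).-1.
Proof.
have s0 : (size (c%:P : {poly R})).-1 = 0%N by rewrite size_polyC; case: (c != 0).
rewrite /resultant det_trig.
  rewrite (eq_bigr (fun _ => c)) ?prodr_const ?card_ord ?s0 // => i _.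
  rewrite Sylvester_mxE; case: splitP => k hk.
    by have := leq_trans (ltn_ord k) (eq_leq s0).
  by rewrite hk s0 add0n leqnn subnn coefC /= mulr1n.
apply/is_trig_mxP => i j lij; rewrite Sylvester_mxE; case: splitP => k hk.
  by have := leq_trans (ltn_ord k) (eq_leq s0).
have lkj : (k < j)%N by move: lij; rewrite hk; have := s0; lia.
by rewrite coefC subn_eq0 leqNgt lkj mul0rn.
Qed.

Section Val.
Variables (K : fieldType) (v : K -> int) (pi : K).
Hypothesis Hv : is_discrete_valuation v.

Definition vge (n : int) (x : K) : bool := (x == 0) || (n <= v x).

Lemma vM x y : x != 0 -> y != 0 -> v (x * y) = v x + v y.
Proof. by case: Hv => h _; apply: h. Qed.

Lemma v1 : v 1 = 0.
Proof. have := vM (oner_neq0 K) (oner_neq0 K); rewrite mulr1 => h.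
have : v 1 + v 1 - v 1 = v 1 - v 1 by rewrite -h.
by rewrite addrK subrr. Qed.

Lemma vN1 : v (-1) = 0.
Proof. have n1: (-1 : K) != 0 by rewrite oppr_eq0 oner_eq0.
have := vM n1 n1; rewrite mulrNN mulr1 v1 => h.
by move: h; lia. Qed.

Lemma vN x : v (- x) = v x.
Proof. have [->|nx] := eqVneq x 0; first by rewrite oppr0.
by rewrite -mulN1r vM ?vN1 ?add0r // oppr_eq0 oner_eq0. Qed.

Lemma vge_le m n x : m <= n -> vge n x -> vge m x.
Proof. by move=> le /orP[h|h]; rewrite /vge ?h // (le_trans le h) orbT. Qed.

Lemma vge0 n : vge n 0. Proof. by rewrite /vge eqxx. Qed.

Lemma vgeN n x : vge n (- x) = vge n x.
Proof. by rewrite /vge oppr_eq0 vN. Qed.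

Lemma vgeD n x y : vge n x -> vge n y -> vge n (x + y).
Proof.
rewrite /vge; have [->|nx] := eqVneq x 0; first by rewrite add0r => _.
have [->|ny] := eqVneq y 0; first by rewrite addr0 (negbTE nx).
move=> /= hx hy; have [->//|nxy] := eqVneq (x + y) 0.
have [_ /(_ x y nx ny nxy) h] := Hv; apply: le_trans h.
by rewrite le_min hx hy.
Qed.

Lemma vgeB n x y : vge n x -> vge n y -> vge n (x - y).
Proof. by move=> hx hy; apply: vgeD; rewrite ?vgeN. Qed.

Lemma vgeM m n x y : vge m x -> vge n y -> vge (m + n) (x * y).
Proof.
rewrite /vge; have [->|nx] := eqVneq x 0; first by rewrite mul0r eqxx.
have [->|ny] := eqVneq y 0; first by rewrite mulr0 eqxx.
by move=> /= hx hy; rewrite mulf_eq0 (negbTE nx) (negbTE ny) /= vM // lerD.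
Qed.

Lemma inAE x : inA v x = vge 0 x. Proof. by []. Qed.

Definition Apred : {pred K} := fun x => inA v x.

Lemma Apred_subring : subring_closed Apred.
Proof.
split.
- by rewrite unfold_in /Apred /inA v1 lexx orbT.
- by move=> x y; rewrite !unfold_in; apply: vgeB.
- by move=> x y; rewrite !unfold_in => hx hy; rewrite /Apred inAE -(addr0 0); apply: vgeM.
Qed.

HB.instance Definition _ := GRing.isSubringClosed.Build K Apred Apred_subring.


Definition AT := {x : K | x \in Apred}.
HB.instance Definition _ := [isSub of AT for @sval _ _].
HB.instance Definition _ := [Choice of AT by <:].
HB.instance Definition _ := [SubChoice_isSubComNzRing of AT by <:].

Lemma map_res (p q : {poly AT}) : lead_coef p != 0 -> lead_coef q != 0 ->
  val (resultant p q) = resultant (map_poly val p) (map_poly val q).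
Proof.
move=> np nq.
have vi : injective (val : AT -> K) by apply: val_inj.
have v0 : val (0 : AT) = 0 by [].
have sm := size_map_inj_poly vi v0.
rewrite /resultant /Sylvester_mx !sm.
rewrite -det_map_mx /= map_col_mx; congr (\det (col_mx _ _));
  by apply: (@map_lin1_mx _ _ val) => w; rewrite map_poly_rV rmorphM /=; congr (poly_rV (_ * _)); exact: (map_rVpoly val w).
Qed.
Lemma bezoutA (f : {poly K}) : f \is a polyOver Apred -> (1 < size f)%N -> (1 < size f^`())%N ->
  exists u w : {poly K}, [/\ u \is a polyOver Apred, w \is a polyOver Apred &
    (resultant f f^`())%:P = u * f + w * f^`()].
Proof.
move=> fA s1 s2.
pose fa := \poly_(i < size f) (insubd (0 : AT) f`_i).
have Ef : map_poly val fa = f.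
  apply/polyP => i; rewrite coef_map_id0 //= coef_poly.
  case: ltnP => hi; first by rewrite insubdK //; exact: (polyOverP fA).
  by rewrite nth_default.
have vi : injective (val : AT -> K) by apply: val_inj.
have v0 : val (0 : AT) = 0 by [].
have sm := size_map_inj_poly vi v0.
have [[u w] /= [_ _ E]] := @resultant_in_ideal _ fa fa^`()
  ltac:(by rewrite -sm Ef)
  ltac:(by rewrite -sm -deriv_map Ef).
exists (map_poly val u), (map_poly val w); split.
- by apply/polyOverP => i; rewrite coef_map_id0 //; apply: valP.
- by apply/polyOverP => i; rewrite coef_map_id0 //; apply: valP.
have Ed : map_poly val (fa^`()) = f^`() by rewrite -deriv_map Ef.
have := congr1 (map_poly val) E; rewrite map_polyC rmorphD !rmorphM /= Ed Ef.
move=> <-; congr (_%:P); rewrite map_res ?Ed ?Ef // lead_coef_eq0 -size_poly_eq0.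
- by rewrite -sm Ef; case: (size f) s1.
- by rewrite -sm Ed; case: (size _) s2.
Qed.

Lemma bezoutA2 (f : {poly K}) : f \is a polyOver Apred -> (1 < size f)%N ->
  exists u w : {poly K}, [/\ u \is a polyOver Apred, w \is a polyOver Apred &
    (resultant f f^`())%:P = u * f + w * f^`()].
Proof.
move=> fA s1; have [s2|s2] := ltnP 1 (size f^`()); first exact: bezoutA.
have E := size1_polyC s2; set c := _`_0 in E.
have cA : c \in Apred by apply: (polyOverP (polyOver_deriv fA)).
exists 0, (c ^+ (size f).-2)%:P; split; rewrite ?rpred0 ?polyOverC ?rpredX //.
rewrite mul0r add0r E res_const -polyCM -exprSr; congr (_ ^+ _)%:P.
by case: (size f) s1 => [|[|n]].
Qed.

Lemma taylorA (p : {poly K}) x h : p \is a polyOver Apred -> x \in Apred -> h \in Apred ->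
  exists2 E, E \in Apred & p.[x + h] = p.[x] + p^`().[x] * h + h ^+ 2 * E.
Proof.
move=> pA xA hA.
pose q := p \Po ('X + x%:P).
have qA : q \is a polyOver Apred by apply: polyOver_comp => //; rewrite polyOverXaddC.
exists (drop_poly 2 q).[h]; first by apply: rpred_horner => //; apply/polyOverP => i;
  rewrite coef_drop_poly; apply: (polyOverP qA).
have -> : p.[x + h] = q.[h] by rewrite horner_comp !hornerE addrC.
rewrite -{1}(poly_take_drop 2 q) hornerD hornerM hornerXn mulrC.
rewrite (horner_coef_wide _ (size_take_poly _ _)) !big_ord_recr big_ord0 /= add0r.
rewrite !coef_take_poly /= expr0 mulr1 expr1; congr (_ + _ * _ + _).
  by rewrite -horner_coef0 horner_comp !hornerE.
have := coef_deriv q 0; rewrite mulr1n => <-.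
rewrite -horner_coef0 deriv_comp derivD derivX derivC addr0 mulr1 horner_comp !hornerE.
done.
Qed.


Lemma AvgeP y : (y \in Apred) = vge 0 y.
Proof. by rewrite unfold_in. Qed.

Lemma key (f : {poly K}) (r : nat) x : f \is a polyOver Apred -> (1 < size f)%N ->
  resultant f f^`() != 0 -> v (resultant f f^`()) = r%:Z -> x \in Apred ->
  vge (r%:Z + 1) f.[x] -> f^`().[x] != 0 /\ v f^`().[x] <= r%:Z.
Proof.
move=> fA s1 nz vr xA hf.
have [u [w [uA wA E]]] := bezoutA2 fA s1.
have Ex := congr1 (horner^~ x) E; rewrite /= hornerC hornerD !hornerM in Ex.
have [hd|nd] := boolP (vge (r%:Z+1) f^`().[x]).
  have : vge (r%:Z+1) (resultant f f^`()).
    rewrite Ex; apply: vgeD; rewrite -[r%:Z+1]add0r; apply: vgeM => //;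
    by rewrite -AvgeP; apply: rpred_horner.
  by rewrite /vge (negbTE nz) vr /=; lia.
move: nd; rewrite /vge negb_or => /andP[nd nv]; split => //.
by move: nv; rewrite -ltNge; lia.
Qed.

Lemma vX x n : x != 0 -> v (x ^+ n) = n%:Z * v x.
Proof.
move=> nx; elim: n => [|n IH]; first by rewrite expr0 v1 mul0r.
by rewrite exprS vM ?expf_neq0 // IH -[n.+1]addn1 PoszD mulrDl mul1r addrC.
Qed.

Lemma vV x : x != 0 -> v (x^-1) = - v x.
Proof.
move=> nx; have := vM nx (invr_neq0 nx); rewrite mulfV // v1 => h.
by move: h; lia.
Qed.

Lemma vgeDiv m x y : y != 0 -> vge m x -> vge (m - v y) (x / y).
Proof.
move=> ny hx; have := vgeM hx (_ : vge (- v y) y^-1); apply.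
by rewrite /vge vV // lexx orbT.
Qed.

Lemma vge_all0 x : (forall n : nat, vge n%:Z x) -> x = 0.
Proof.
move=> h; apply/eqP; have := h `|v x|.+1; rewrite /vge => /orP[//|].
by move=> hh; exfalso; move: hh; lia.
Qed.


Section Hensel.
Variables (f : {poly K}) (r N : nat).
Hypotheses (fA : f \is a polyOver Apred) (s1 : (1 < size f)%N)
  (nz : resultant f f^`() != 0) (vr : v (resultant f f^`()) = r%:Z) (HN : (2 * r < N)%N).

Definition g x := x - f.[x] / f^`().[x].

Lemma step x (n : nat) : x \in Apred -> vge (N + n)%:Z f.[x] ->
  [/\ g x \in Apred, vge (N + n.+1)%:Z f.[g x] & vge ((N + n)%:Z - r%:Z) (g x - x)].
Proof.
move=> xA hf.
have hf' : vge (r%:Z + 1) f.[x] by apply: vge_le hf; lia.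
have [nd vd] := key fA s1 nz vr xA hf'.
set d := f^`().[x] in nd vd *.
pose h := - (f.[x] / d).
have hh : vge ((N + n)%:Z - v d) h by rewrite /h vgeN; apply: vgeDiv.
have hh' : vge ((N + n)%:Z - r%:Z) h by apply: vge_le hh; lia.
have hA : h \in Apred by rewrite AvgeP; apply: vge_le hh'; lia.
have Eg : g x = x + h by [].
have [E EA Ef] := taylorA fA xA hA.
have -> : g x - x = h by rewrite Eg addrC addKr.
split => //.
- by rewrite Eg AvgeP; apply: vgeD => //; rewrite -AvgeP.
rewrite Eg Ef -/d.
have -> : d * h = - f.[x] by rewrite /h mulrN mulrC divfK.
rewrite addrN add0r expr2.
have := vgeM (vgeM hh hh) (_ : vge 0 E); rewrite -?AvgeP => /(_ EA).
by apply: vge_le; lia.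
Qed.

Variable a0 : K.
Hypotheses (a0A : a0 \in Apred) (ha0 : vge N%:Z f.[a0]).

Definition seqa n := iter n g a0.

Lemma inv n : seqa n \in Apred /\ vge (N + n)%:Z f.[seqa n].
Proof.
elim: n => [|n [IH1 IH2]]; first by rewrite addn0.
by have [? ? _] := step IH1 IH2; rewrite /seqa iterS.
Qed.

Lemma dist n d : vge ((N + n)%:Z - r%:Z) (seqa (n + d) - seqa n).
Proof.
elim: d => [|d IH]; first by rewrite addn0 subrr vge0.
rewrite addnS /seqa iterS -/(seqa (n + d)).
have [h1 h2] := inv (n + d); have [_ _ h3] := step h1 h2.
rewrite -(subrK (seqa (n + d)) (g _)) -addrA; apply: vgeD => //.
by apply: vge_le h3; lia.
Qed.

Lemma hensel_root : v_complete v ->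
  exists2 l, root f l & vge (r%:Z + 1) (l - a0).
Proof.
move=> Hc.
have [l Hl] : exists l : K, forall n : nat, exists m0 : nat, forall m : nat,
    (m0 <= m)%N -> vclose v n (seqa m) l.
  apply: Hc => n; exists n => m p hm hp.
  rewrite /vclose -/(vge _ _).
  have -> : seqa m - seqa p = (seqa (n + (m - n)) - seqa n) - (seqa (n + (p - n)) - seqa n).
    by rewrite !subnKC // opprB addrA subrK.
  by apply: vge_le (vgeB (dist n _) (dist n _)); lia.
have cl n m0 m : (m0 <= m)%N -> (forall m, (m0 <= m)%N -> vclose v n (seqa m) l) ->
    vge n%:Z (seqa m - l) by move=> hm H; apply: H.
have [m0 Hm0] := Hl r.+1.
have hlm := cl _ _ m0 (leqnn _) Hm0.
have hd := dist 0 m0; rewrite add0n /seqa /= -/(seqa m0) in hd.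
have la0 : vge (r%:Z + 1) (l - a0).
  have -> : l - a0 = (seqa m0 - a0) - (seqa m0 - l) by ring.
  apply: vgeB; first by apply: vge_le hd; rewrite addn0; lia.
  by apply: vge_le hlm; lia.
exists l => //; apply/eqP/vge_all0 => n.
have [m1 Hm1] := Hl n.
have hlm1 := cl _ _ (m1 + n) (leq_addr _ _) Hm1.
have [xA hfx] := inv (m1 + n).
have hA : l - seqa (m1 + n) \in Apred.
  by rewrite AvgeP -opprB vgeN; apply: vge_le hlm1; lia.
have [E EA Ef] := taylorA fA xA hA.
move: Ef; rewrite addrC subrK => ->.
apply: vgeD; first apply: vgeD.
- by apply: vge_le hfx; lia.
- rewrite -[n%:Z]add0r; apply: vgeM; first by rewrite -AvgeP; apply: rpred_horner => //; exact: polyOver_deriv.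
  by rewrite -opprB vgeN.
- rewrite -[n%:Z]addr0; apply: vgeM; last by rewrite -AvgeP.
  rewrite expr2; apply: vge_le (vgeM (_ : vge n%:Z _) (_ : vge 0 _)).
  + by rewrite addr0.
  + by rewrite -opprB vgeN.
  + by rewrite -AvgeP.
Qed.

End Hensel.


Lemma main_sec (Hpi0 : pi != 0) (Hpi : v pi = 1)
  (Hcomplete : v_complete v)
  (f : {poly K}) (HfA : forall i : nat, inA v f`_i) (Hmonic : f \is monic)
  (HD : resultant f f^`() != 0)
  (r : nat) (Hr : v (resultant f f^`()) = r%:Z)
  (N : nat) (HN : (2 * r < N)%N)
  (k : nat) (a : 'I_k -> K)
  (HaA : forall i, inA v (a i))
  (Hroot : forall i, in_piA v pi N f.[a i])
  (Hdist : forall i j, i != j -> ~ approx v pi N r (a i) (a j)) :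
  exists s : seq K, [/\ uniq s, all (root f) s & (k <= size s)%N].
Proof.
have vpiN n : vge n%:Z (pi ^+ n) by rewrite /vge vX // Hpi mulr1 lexx orbT.
have fA : f \is a polyOver Apred by apply/polyOverP => i; rewrite unfold_in.
have [s1|s1] := ltnP 1 (size f); last first.
  have f1 : f = 1.
    rewrite (size1_polyC s1); have := monicP Hmonic; rewrite /lead_coef.
    have : size f != 0%N by rewrite size_poly_eq0 monic_neq0.
    by case: (size f) s1 => [|[|]] //= _ _ ->.
  exists [::]; split => //; case: k a HaA Hroot Hdist => // k' a' _ Hr' _.
  have [c [cA Ec]] := Hr' ord0; move: Ec; rewrite f1 hornerC => Ec.
  have nc : c != 0 by apply: contra_eq_neq Ec => ->; rewrite mulr0 oner_neq0.
  have := congr1 v Ec; rewrite v1 vM ?expf_neq0 // vX // Hpi mulr1.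
  move: cA; rewrite /inA (negbTE nc) /= => cA h; exfalso; move: cA h; lia.
have ex i : exists l, root f l && vge (r%:Z + 1) (l - a i).
  have aA : a i \in Apred by rewrite unfold_in.
  have ha : vge N%:Z f.[a i].
    have [c [cA ->]] := Hroot i; rewrite -[N%:Z]addr0; apply: vgeM => //.
  have [l hl1 hl2] := hensel_root fA s1 HD Hr HN aA ha Hcomplete.
  by exists l; rewrite hl1 hl2.
pose al i := xchoose (ex i).
have alP i : root f (al i) && vge (r%:Z + 1) (al i - a i) := xchooseP (ex i).
exists (map al (enum 'I_k)); split.
- rewrite map_inj_uniq ?enum_uniq // => i j Eij; apply/eqP; apply: contraT => nij.
  exfalso; apply: (Hdist i j nij); rewrite /approx leqNgt (_ : (r < N)%N) /=; last by lia.
  have pr0 : pi ^+ r.+1 != 0 by rewrite expf_neq0.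
  exists ((a i - a j) / pi ^+ r.+1); split.
    rewrite /inA -/(vge 0 _); have := vgeDiv (m := r.+1%:Z) pr0; rewrite vX // Hpi mulr1 subrr.
    apply; have -> : a i - a j = (al j - a j) - (al i - a i) by rewrite Eij; ring.
    have /andP[_ h1] := alP i; have /andP[_ h2] := alP j.
    by apply: vgeB; apply: vge_le (h2 : vge _ _) || apply: vge_le (h1 : vge _ _); lia.
  exists 0; split; first by rewrite /inA eqxx.
  by rewrite mulrC divfK // subrr mulr0.
- by apply/allP => y /mapP [i _ ->]; have /andP[] := alP i.
- by rewrite size_map size_enum_ord.
Qed.

End Val.

Theorem lemma3p8 (K : fieldType) (v : K -> int) (pi : K)
  (Hv : is_discrete_valuation v) (Hpi0 : pi != 0) (Hpi : v pi = 1)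
  (Hcomplete : v_complete v) (Hres : finite_residue_field v pi)
  (f : {poly K}) (HfA : forall i : nat, inA v f`_i) (Hmonic : f \is monic)
  (HD : resultant f f^`() != 0)
  (r : nat) (Hr : v (resultant f f^`()) = r%:Z)
  (N : nat) (HN : (2 * r < N)%N)
  (k : nat) (a : 'I_k -> K)
  (HaA : forall i, inA v (a i))
  (Hroot : forall i, in_piA v pi N f.[a i])
  (Hdist : forall i j, i != j -> ~ approx v pi N r (a i) (a j)) :
  exists s : seq K, [/\ uniq s, all (root f) s & (k <= size s)%N].
Proof. exact: (@main_sec K v pi Hv Hpi0 Hpi Hcomplete f HfA Hmonic HD r Hr N HN k a HaA Hroot Hdist). Qed.
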